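(* Let $\mathbb{K}=(G,M,I)$ be a formal context and $\mathcal{R}$ a closure system on $G$ with $\mathcal{R}\subseteq\operatorname{Ext}(\mathbb{K})$. Let $$\hat{\mathcal{R}}=\bigvee_{A\in\mathcal{M}(\operatorname{Ext}(\mathbb{K}))\setminus\mathcal{M}(\mathcal{R})}\{A,G\},$$ the join taken in the lattice ${\downarrow}\operatorname{Ext}(\mathbb{K})$. Then $\hat{\mathcal{R}}$ is the inclusion-minimum closure system in ${\downarrow}\operatorname{Ext}(\mathbb{K})$ satisfying $\mathcal{R}\vee\hat{\mathcal{R}}=\operatorname{Ext}(\mathbb{K})$.
   Context: A formal context is a triple $(G,M,I)$ with finite nonempty sets $G$, $M$ and $I\subseteq G\times M$; derivations $A'=\{m\mid\forall a\in A:(a,m)\in I\}$, $B'=\{g\mid\forall b\in B:(g,b)\in I\}$; $\operatorname{Ext}(\mathbb{K})=\{A\subseteq G\mid A''=A\}$. A closure system on $G$ is a family of subsets of $G$ containing $G$ and closed under intersections. ${\downarrow}\operatorname{Ext}(\mathbb{K})$ is the lattice of all closure systems on $G$ contained in $\operatorname{Ext}(\mathbb{K})$, ordered by inclusion; its join of a family is the smallest closure system on $G$ containing the union (an empty join is $\{G\}$). For a closure system $\mathcal{C}$ viewed as a lattice under inclusion, $\mathcal{M}(\mathcal{C})$ denotes its set of meet-irreducible elements ($x\neq\top$ and $x=\bigwedge Y$ implies $x\in Y$). *)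

(* Defs.v *)
From mathcomp Require Import all_boot.
Set Implicit Arguments. Unset Strict Implicit. Unset Printing Implicit Defensive.

Section FCA.
Variables (G M : finType) (I : G -> M -> bool).

Definition derG (A : {set G}) : {set M} := [set m | [forall a in A, I a m]].
Definition derM (B : {set M}) : {set G} := [set g | [forall b in B, I g b]].

Definition Ext : {set {set G}} := [set A | derM (derG A) == A].
End FCA.

Section CS.
Variable G : finType.

Definition closure_system (F : {set {set G}}) : Prop :=
  setT \in F /\ forall S : {set {set G}}, S \subset F -> \bigcap_(A in S) A \in F.

(* join in the lattice of closure systems: the smallest closure system
   containing the given family (here: the union of the joined families) *)
Definition cs_join (F : {set {set G}}) : {set {set G}} :=
  \bigcap_(C : {set {set G}} | [&& setT \in C,
       [forall S : {set {set G}}, (S \subset C) ==> (\bigcap_(A in S) A \in C)]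
       & F \subset C]) C.

(* meet-irreducible elements of a closure system C viewed as a lattice under
   inclusion: top is G, meets are intersections (empty meet = G) *)
Definition meet_irr (C : {set {set G}}) (x : {set G}) : bool :=
  [&& x \in C, x != setT &
      [forall Y : {set {set G}}, (Y \subset C) ==> (x == \bigcap_(A in Y) A) ==> (x \in Y)]].

Definition Rhat (E R : {set {set G}}) : {set {set G}} :=
  cs_join (\bigcup_(A | meet_irr E A && ~~ meet_irr R A) [set A; setT]).
End CS.

(* Main.v *)
Require Import Defs.
From mathcomp Require Import all_boot.
Set Implicit Arguments.

Section Aux.
Variable G : finType.
Implicit Types F C E : {set {set G}}.

Lemma cs_join_cs F : closure_system (cs_join F).
Proof.
split.
  by apply/bigcapP => C /and3P [].
move=> S SF; apply/bigcapP => C PC; move: (PC) => /and3P [_ /forallP H _].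
apply: (implyP (H S)); apply: subset_trans SF _.
by apply/subsetP => x /bigcapP; apply.
Qed.

Lemma cs_join_min F C : closure_system C -> F \subset C -> cs_join F \subset C.
Proof.
move=> [CT CI] FC; apply: bigcap_inf; apply/and3P; split => //.
by apply/forallP => S; apply/implyP => /CI.
Qed.

Lemma cs_join_sub F : F \subset cs_join F.
Proof. by apply/subsetP => x xF; apply/bigcapP => C /and3P [_ _ /subsetP]; apply. Qed.

Lemma gen E C : closure_system C -> (forall x, meet_irr E x -> x \in C) ->
  E \subset C.
Proof.
move=> [CT CI] HM.
suff H : forall n x, #|~: x| = n -> x \in E -> x \in C.
  by apply/subsetP => x; apply: H.
elim/ltn_ind => n IH x xn xE.
case: (boolP (meet_irr E x)) => [/HM //|].
rewrite /meet_irr xE /=.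
case: eqVneq => [-> //|nx] /=.
move/forallPn => [Y]; rewrite !negb_imply => /andP [YE /andP [/eqP xY xnY]].
rewrite xY; apply: CI; apply/subsetP => y yY.
have xy : x \proper y.
  rewrite properEneq; apply/andP; split.
    by apply/eqP => exy; move: xnY; rewrite exy yY.
  by rewrite xY; apply: bigcap_inf.
apply: (IH #|~: y|) => //; last by apply: (subsetP YE).
by rewrite -xn; apply: proper_card; rewrite properC.
Qed.

Lemma cs_join_repr F A : A \in cs_join F ->
  A = \bigcap_(B in [set B in F | A \subset B]) B.
Proof.
pose D := [set X : {set G} | X == \bigcap_(B in [set B in F | X \subset B]) B].
have DX (X : {set G}) : X \in D -> X = \bigcap_(B in [set B in F | X \subset B]) B.
  by rewrite inE => /eqP.
have sub : forall X : {set G}, X \subset \bigcap_(B in [set B in F | X \subset B]) B.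
  by move=> X; apply/bigcapsP => B; rewrite inE => /andP [].
have csD : closure_system D.
  split.
    by rewrite inE eqEsubset subsetT sub.
  move=> S SD; rewrite inE eqEsubset sub /=.
  apply/bigcapsP => s sS.
  rewrite (DX s (subsetP SD s sS)).
  apply/bigcapsP => B; rewrite inE => /andP [BF sB].
  apply: bigcap_inf; rewrite inE BF /=.
  by apply: subset_trans sB; apply: bigcap_inf.
have FD : F \subset D.
  apply/subsetP => A0 A0F; rewrite inE eqEsubset sub /=.
  by apply: bigcap_inf; rewrite inE A0F subxx.
by move=> AJ; apply: DX; exact: (subsetP (cs_join_min csD FD) A AJ).
Qed.

Lemma irr_in_join E F A : F \subset E -> meet_irr E A -> A \in cs_join F -> A \in F.
Proof.
move=> FE /and3P [_ _ /forallP H] AJ.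
have Y : [set B in F | A \subset B] \subset E.
  by apply: subset_trans FE; apply/subsetP => B; rewrite inE => /andP [].
move: (implyP (H [set B in F | A \subset B]) Y).
by move/implyP => /(_ (introT eqP (cs_join_repr AJ))); rewrite inE => /andP [].
Qed.

End Aux.

Lemma Ext_cs (G M : finType) (I : G -> M -> bool) : closure_system (Ext I).
Proof.
have ext : forall X : {set G}, X \subset derM I (derG I X).
  move=> X; apply/subsetP => g gX; rewrite inE; apply/forallP => b.
  by apply/implyP; rewrite inE => /forallP /(_ g) /implyP; apply.
have mono : forall X Y : {set G}, X \subset Y ->
    derM I (derG I X) \subset derM I (derG I Y).
  move=> X Y XY; apply/subsetP => g; rewrite !inE => /forallP H.
  apply/forallP => b; apply/implyP => bY; apply: (implyP (H b)).
  move: bY; rewrite !inE => /forallP H2; apply/forallP => a.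
  by apply/implyP => aX; apply: (implyP (H2 a)); apply: (subsetP XY).
split.
  by rewrite inE eqEsubset subsetT ext.
move=> S SE; rewrite inE eqEsubset ext andbT.
apply/bigcapsP => s sS.
have : s \in Ext I by apply: (subsetP SE).
rewrite inE => /eqP <-; apply: mono; exact: bigcap_inf.
Qed.

Theorem lemma2 (G M : finType) (I : G -> M -> bool)
  (hG : 0 < #|G|) (hM : 0 < #|M|) (R : {set {set G}}) :
  closure_system R -> R \subset Ext I ->
  [/\ closure_system (Rhat (Ext I) R),
      Rhat (Ext I) R \subset Ext I,
      cs_join (R :|: Rhat (Ext I) R) = Ext I &
      forall C : {set {set G}}, closure_system C -> C \subset Ext I ->
        cs_join (R :|: C) = Ext I -> Rhat (Ext I) R \subset C].
Proof.
move=> csR RE.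
have csE := @Ext_cs G M I.
have irrR : forall A, meet_irr (Ext I) A -> A \in R -> meet_irr R A.
  move=> A /and3P [_ nA /forallP H] AR; rewrite /meet_irr AR nA /=.
  apply/forallP => Y; apply/implyP => YR; apply: (implyP (H Y)).
  exact: subset_trans RE.
have unionE : forall C, closure_system C ->
   (forall A, meet_irr (Ext I) A -> ~~ meet_irr R A -> A \in C) ->
   \bigcup_(A | meet_irr (Ext I) A && ~~ meet_irr R A) [set A; setT] \subset C.
  move=> C [CT _] HC; apply/bigcupsP => A /andP [h1 h2].
  by apply/subsetP => x; rewrite !inE => /orP [/eqP ->|/eqP ->] //; apply: HC.
have RhE : Rhat (Ext I) R \subset Ext I.
  apply: cs_join_min => //; apply: unionE => // A /and3P [] //.
split => //.
- exact: cs_join_cs.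
- apply/eqP; rewrite eqEsubset; apply/andP; split.
    by apply: cs_join_min => //; rewrite subUset RE.
  apply: gen; first exact: cs_join_cs.
  move=> A AI; apply: (subsetP (@cs_join_sub _ (R :|: Rhat (Ext I) R))).
  case: (boolP (meet_irr R A)) => hR.
    by rewrite inE; move: hR => /and3P [-> _ _].
  rewrite inE; apply/orP; right.
  apply: (subsetP (@cs_join_sub _ _)); apply/bigcupP; exists A; first by rewrite AI.
  by rewrite !inE eqxx.
- move=> C csC CE hJ; apply: cs_join_min => //.
  apply: unionE => // A AI nR.
  have : A \in R :|: C.
    apply: (irr_in_join _ AI); first by rewrite subUset RE.
    by rewrite hJ; move: AI => /and3P [].
  rewrite inE => /orP [AR|//].
  by move: nR; rewrite irrR.
Qed.
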